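(* Let $\mathfrak{n}^{\mathbb{Q}}$ be a rational nilpotent Lie algebra of nilpotency class $c$ and $f$ an Anosov automorphism of $\mathfrak{n}^{\mathbb{Q}}$. Then $\min(\mathrm{sg}(f))\geq c$, i.e. $f$ has at least $c$ eigenvalues (with multiplicity) of absolute value $<1$ and at least $c$ eigenvalues of absolute value $>1$.
   Context: The lower central series is $\gamma_1(\mathfrak{n})=\mathfrak{n}$, $\gamma_i(\mathfrak{n})=[\mathfrak{n},\gamma_{i-1}(\mathfrak{n})]$; $\mathfrak{n}$ has nilpotency class $c$ if $\gamma_{c+1}(\mathfrak{n})=0\neq\gamma_c(\mathfrak{n})$. An automorphism of a rational Lie algebra is Anosov if it is hyperbolic (no eigenvalue of absolute value $1$) and integer-like (characteristic polynomial with integer coefficients and determinant $\pm1$). Its signature $\mathrm{sg}(f)$ is the set $\{p,q\}$ with $p$ the number of eigenvalues of absolute value $<1$ and $q$ the number of absolute value $>1$. *)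

(* Defs.v *)
From HB Require Import structures.
From mathcomp Require Import all_boot all_order all_algebra all_field.
Set Implicit Arguments. Unset Strict Implicit. Unset Printing Implicit Defensive.
Import Order.TTheory GRing.Theory Num.Theory.
Local Open Scope ring_scope.

(* A finite-dimensional rational Lie algebra of dimension n is Q^n
   (row vectors 'rV[rat]_n) equipped with a Lie bracket. *)
Definition is_lie_bracket (n : nat) (br : 'rV[rat]_n -> 'rV[rat]_n -> 'rV[rat]_n) : Prop :=
  [/\ (forall (a : rat) x y z, br (a *: x + y) z = a *: br x z + br y z),
      (forall (a : rat) x y z, br z (a *: x + y) = a *: br z x + br z y),
      (forall x, br x x = 0) &
      (forall x y z, br x (br y z) + br y (br z x) + br z (br x y) = 0)].

(* Lower central series: lcs br i is the subspace gamma_i (as a predicate),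
   gamma_1 = n, gamma_{i+1} = span { [x, y] | y in gamma_i }.
   (Index 0 is not used; it is just {0}.) *)
Inductive lcs (n : nat) (br : 'rV[rat]_n -> 'rV[rat]_n -> 'rV[rat]_n)
  : nat -> 'rV[rat]_n -> Prop :=
| lcs_top x : lcs br 1 x
| lcs_br i x y : lcs br i.+1 y -> lcs br i.+2 (br x y)
| lcs_zero i : lcs br i 0
| lcs_add i u v : lcs br i u -> lcs br i v -> lcs br i (u + v)
| lcs_scale i (a : rat) u : lcs br i u -> lcs br i (a *: u).

Definition nilpotency_class n (br : 'rV[rat]_n -> 'rV[rat]_n -> 'rV[rat]_n) (c : nat) : Prop :=
  (forall x, lcs br c.+1 x -> x = 0) /\ (exists x, lcs br c x /\ x != 0).

Definition is_lie_automorphism n (br : 'rV[rat]_n -> 'rV[rat]_n -> 'rV[rat]_n)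
  (f : 'M[rat]_n) : Prop :=
  f \in unitmx /\ (forall x y, br x y *m f = br (x *m f) (y *m f)).

Definition char_polyC n (f : 'M[rat]_n) : {poly algC} := char_poly (map_mx ratr f).

Definition hyperbolic n (f : 'M[rat]_n) : Prop :=
  forall z : algC, root (char_polyC f) z -> `|z| != 1.

Definition integer_like n (f : 'M[rat]_n) : Prop :=
  (forall i, (char_poly f)`_i \is a Num.int) /\ (\det f = 1 \/ \det f = -1).

Definition anosov n (f : 'M[rat]_n) : Prop := hyperbolic f /\ integer_like f.

(* Main.v *)
Require Import Defs.
From HB Require Import structures.
From mathcomp Require Import all_boot all_order all_algebra all_field.
From Stdlib Require Import Classical ClassicalEpsilon.
Set Implicit Arguments. Unset Strict Implicit. Unset Printing Implicit Defensive.
Import Order.TTheory GRing.Theory Num.Theory.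
Local Open Scope ring_scope.

Section LinAlg.
Variable F : fieldType.

Lemma char_poly_conj n (P A : 'M[F]_n) : P \in unitmx ->
  char_poly (P *m A *m invmx P) = char_poly A.
Proof.
move=> uP; rewrite /char_poly /char_poly_mx.
have e1 : map_mx (@polyC F) P *m map_mx polyC (invmx P) = 1%:M.
  by rewrite -map_mxM mulmxV // map_mx1.
have -> : 'X%:M - map_mx polyC (P *m A *m invmx P) =
   map_mx polyC P *m ('X%:M - map_mx polyC A) *m map_mx polyC (invmx P).
  rewrite mulmxBr mulmxBl scalar_mxC -(mulmxA _ (map_mx polyC P)) e1 mulmx1.
  by rewrite !map_mxM.
rewrite !det_mulmx mulrC mulrA -!det_mulmx.
by rewrite -map_mxM mulVmx // map_mx1 mul1mx.
Qed.

Lemma char_poly_lblock m s (A : 'M[F]_m) (X : 'M_(s, m)) (Y : 'M_s) :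
  char_poly (block_mx A 0 X Y) = char_poly A * char_poly Y.
Proof.
rewrite /char_poly /char_poly_mx map_block_mx /= map_mx0 scalar_mx_block.
by rewrite opp_block_mx add_block_mx oppr0 addr0 add0r det_lblock.
Qed.


Lemma char_poly_split_rs r s (B : 'M[F]_(r, r + s)) (C : 'M_(s, r + s))
  (f : 'M_(r + s)) : col_mx B C \in unitmx -> (B *m f <= B)%MS ->
  exists Y : 'M_s, char_poly f = char_poly (conjmx B f) * char_poly Y.
Proof.
move=> uP sB; set P := col_mx B C; set A1 := conjmx B f.
set Z := C *m f *m invmx P; exists (rsubmx Z).
have hB : A1 *m B = B *m f by rewrite /A1 /conjmx mulmxKpV.
have hC : Z *m P = C *m f by rewrite /Z mulmxKV.
have key : P *m f *m invmx P = block_mx A1 0 (lsubmx Z) (rsubmx Z).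
  rewrite -[RHS](mulmxK uP); congr (_ *m _).
  rewrite /P mul_col_mx mul_block_col mul0mx addr0 hB -mul_row_col hsubmxK.
  by rewrite -/P hC.
by rewrite -(char_poly_conj f uP) key char_poly_lblock.
Qed.


Lemma char_poly_split_gen r s n (e : n = (r + s)%N) (B : 'M[F]_(r, n))
  (C : 'M_(s, n)) (f : 'M_n) : row_full (col_mx B C) -> (B *m f <= B)%MS ->
  exists Y : 'M_s, char_poly f = char_poly (conjmx B f) * char_poly Y.
Proof.
subst n => rf sB; apply: (@char_poly_split_rs _ _ B C) => //; by rewrite -row_full_unit.
Qed.

Lemma char_poly_split p n (U : 'M[F]_(p, n)) (f : 'M_n) : (U *m f <= U)%MS ->
  exists q : {poly F}, [/\ q \is monic, size q = (n - \rank U).+1 &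
     char_poly f = char_poly (conjmx (row_base U) f) * q].
Proof.
move=> sU.
have e : n = (\rank U + \rank (U^C)%MS)%N by rewrite mxrank_compl subnKC ?rank_leq_col.
have rf : row_full (col_mx (row_base U) (row_base (U^C)%MS)).
  have h1 : (1%:M <= U + U^C)%MS by rewrite sub1mx addsmx_compl_full.
  rewrite -sub1mx -addsmxE; apply: (submx_trans h1).
  by apply: addsmxS; rewrite eq_row_base.
have sB : (row_base U *m f <= row_base U)%MS.
  by rewrite stablemx_row_base.
have [Y hY] := char_poly_split_gen e rf sB.
exists (char_poly Y); split => //; first exact: char_poly_monic.
by rewrite size_char_poly mxrank_compl.
Qed.


Lemma flag_dvd (k : nat) : forall p n (f : 'M[F]_n) (V : nat -> 'M[F]_(p, n)),
  row_full (V 0%N) -> (forall i, (V i *m f <= V i)%MS) ->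
  (forall i, (V i.+1 <= V i)%MS) ->
  (forall i, (i < k)%N -> (\rank (V i.+1) < \rank (V i))%N) ->
  exists ps : seq {poly F}, [/\ size ps = k, all (fun q => q \is monic) ps,
     all (fun q : {poly F} => 1 < size q)%N ps & \prod_(q <- ps) q %| char_poly f].
Proof.
elim: k => [|k IH] p n f V rf st inc rk.
  by exists [::]; rewrite big_nil dvd1p.
have [q [mq sq hq]] := char_poly_split (st 1%N).
set U := V 1%N in mq sq hq.
set B := row_base U in hq. set A1 := conjmx B f in hq.
pose W i := V i.+1 *m pinvmx B.
have sub1 i : (V i.+1 <= U)%MS.
  elim: i => [|i IHi]; first exact: submx_refl.
  exact: submx_trans (inc _) IHi.
have WB i : W i *m B = V i.+1.
  by rewrite /W mulmxKpV // eq_row_base.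
have rW i : \rank (W i) = \rank (V i.+1).
  by rewrite -(WB i) mxrankMfree // row_base_free.
have h1 : row_full (W 0%N) by rewrite /row_full rW.
have h2 i : (W i *m A1 <= W i)%MS.
  have -> : W i *m A1 = (W i *m B) *m f *m pinvmx B.
    by rewrite /A1 /conjmx !mulmxA.
  rewrite WB; apply: submxMr; exact: st.
have h3 i : (W i.+1 <= W i)%MS by apply: submxMr; exact: inc.
have h4 j : (j < k)%N -> (\rank (W j.+1) < \rank (W j))%N.
  by move=> ik; rewrite !rW; apply: rk.
have [ps [s1 s2 s3 s4]] := IH _ _ A1 W h1 h2 h3 h4.
exists (q :: ps); split => /=.
- by rewrite s1.
- by rewrite mq s2.
- rewrite s3 sq andbT ltnS subn_gt0.
  by have := rk 0%N isT; rewrite (eqP rf).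
- by rewrite big_cons hq mulrC; apply: dvdp_mul => //; exact: dvdpp.
Qed.

End LinAlg.

Lemma max_exists (Q : nat -> Prop) (b : nat) : Q 0%N ->
  (forall r, Q r -> (r <= b)%N) -> exists r, Q r /\ forall r', Q r' -> (r' <= r)%N.
Proof.
move=> Q0 Qb; apply: NNPP => H.
have step r : Q r -> exists r', Q r' /\ (r < r')%N.
  move=> Qr; apply: NNPP => H2; apply: H; exists r; split => // r' Qr'.
  rewrite leqNgt; apply/negP => lt; apply: H2; by exists r'.
have ind j : exists r, Q r /\ (j <= r)%N.
  elim: j => [|j [r [Qr le]]]; first by exists 0%N.
  have [r' [Qr' lt]] := step r Qr; exists r'; split => //.
  exact: leq_ltn_trans le lt.
have [r [Qr le]] := ind b.+1; have := Qb r Qr.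
by rewrite leqNgt le.
Qed.

Section Sub.
Variable F : fieldType.

Lemma subspace_mx n (P : 'rV[F]_n -> Prop) : P 0 ->
  (forall u v, P u -> P v -> P (u + v)) -> (forall a u, P u -> P (a *: u)) ->
  exists M : 'M[F]_n, forall x, (x <= M)%MS <-> P x.
Proof.
move=> P0 PD PZ.
pose Q r := exists M : 'M[F]_n, (forall y, (y <= M)%MS -> P y) /\ \rank M = r.
have Q0 : Q 0%N.
  exists 0; split; last exact: mxrank0.
  by move=> y; rewrite submx0 => /eqP ->.
have Qb r : Q r -> (r <= n)%N by case=> M [_ <-]; exact: rank_leq_col.
have [r [[M [HM rM]] Hmax]] := max_exists Q0 Qb.
exists M => x; split; first exact: HM.
move=> Px; apply/idPn => nx.
have : Q (\rank (M + x)%MS).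
  exists (M + x)%MS; split => // y /sub_addsmxP [u ->].
  apply: PD; first by apply: HM; exact: submxMl.
  by rewrite [u.2]mx11_scalar mul_scalar_mx; apply: PZ.
move/Hmax; rewrite -rM leqNgt => /negP; apply.
have : (M < M + x)%MS by rewrite ltmxE addsmxSl addsmx_sub submx_refl.
by rewrite ltmxErank => /andP [].
Qed.

End Sub.

Section Lie.
Variables (n : nat) (br : 'rV[rat]_n -> 'rV[rat]_n -> 'rV[rat]_n).

Lemma lcs0_aux m x : lcs br m x -> m = 0%N -> x = 0.
Proof.
induction 1 => //= Em; rewrite ?IHlcs1 ?IHlcs2 ?IHlcs ?addr0 ?scaler0 //.
Qed.

Lemma lcs0 x : lcs br 0 x -> x = 0.
Proof. by move=> H; apply: lcs0_aux H _. Qed.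

Lemma lcs_mono_aux m x : lcs br m x -> forall j, m = j.+2 -> lcs br j.+1 x.
Proof.
induction 1 => j Em //.
- case: Em => <-; case: i H IHlcs => [|i] H IHlcs; first exact: lcs_top.
  by apply: lcs_br; apply: IHlcs.
- exact: lcs_zero.
- by apply: lcs_add; [apply: IHlcs1 | apply: IHlcs2].
- by apply: lcs_scale; apply: IHlcs.
Qed.

Lemma lcs_mono i x : lcs br i.+2 x -> lcs br i.+1 x.
Proof. by move=> H; apply: lcs_mono_aux H _ _. Qed.

Lemma lcs_aut (f : 'M[rat]_n) : (forall x y, br x y *m f = br (x *m f) (y *m f)) ->
  forall m x, lcs br m x -> lcs br m (x *m f).
Proof.
move=> hf m x H; induction H.
- exact: lcs_top.
- by rewrite hf; apply: lcs_br.
- by rewrite mul0mx; apply: lcs_zero.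
- by rewrite mulmxDl; apply: lcs_add.
- by rewrite -scalemxAl; apply: lcs_scale.
Qed.

Lemma lcs_stuck_aux i : (forall x, lcs br i.+1 x -> lcs br i.+2 x) ->
  forall m x, lcs br m x -> m = i.+2 -> lcs br i.+3 x.
Proof.
move=> hyp m x; induction 1 => Em //.
- by case: Em => Ei; rewrite Ei in H *; apply: lcs_br; apply: hyp.
- exact: lcs_zero.
- by apply: lcs_add; [apply: IHlcs1 | apply: IHlcs2].
- by apply: lcs_scale; apply: IHlcs.
Qed.

Lemma lcs_stuck i : (forall x, lcs br i.+1 x -> lcs br i.+2 x) ->
  forall x, lcs br i.+2 x -> lcs br i.+3 x.
Proof. by move=> hyp x H; apply: lcs_stuck_aux H _. Qed.

Lemma lcs_strict c : nilpotency_class br c -> forall j, (j < c)%N ->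
  exists x, lcs br j.+1 x /\ ~ lcs br j.+2 x.
Proof.
case=> Hz [x0 [Hx0 nx0]] j jc; apply: NNPP => H.
have h0 : forall x, lcs br j.+1 x -> lcs br j.+2 x.
  move=> x Hx; apply: NNPP => Hn; apply: H; by exists x.
have hd d : forall x, lcs br (j + d).+1 x -> lcs br (j + d).+2 x.
  elim: d => [|d IHd]; first by rewrite addn0.
  by rewrite addnS; apply: lcs_stuck.
have e : c = (j + (c - j.+1)).+1 by rewrite -addSn subnKC.
move: Hx0; rewrite {1}e => /hd; rewrite -e => /Hz Hx.
by rewrite Hx eqxx in nx0.
Qed.

End Lie.

Lemma lie_flag n (br : 'rV[rat]_n -> 'rV[rat]_n -> 'rV[rat]_n) c (f : 'M[rat]_n) :
  nilpotency_class br c -> is_lie_automorphism br f ->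
  exists ps : seq {poly rat}, [/\ size ps = c, all (fun q => q \is monic) ps,
     all (fun q : {poly rat} => 1 < size q)%N ps & \prod_(q <- ps) q %| char_poly f].
Proof.
move=> nc [_ hf].
have hV i : exists M : 'M[rat]_n, forall x, (x <= M)%MS <-> lcs br i.+1 x.
  apply: subspace_mx; [exact: lcs_zero | exact: lcs_add | exact: lcs_scale].
pose V i := proj1_sig (constructive_indefinite_description _ (hV i)).
have HV i x : (x <= V i)%MS <-> lcs br i.+1 x.
  exact: (proj2_sig (constructive_indefinite_description _ (hV i))).
apply: (@flag_dvd _ c n n f V).
- rewrite -sub1mx; apply/row_subP => i; apply/HV; exact: lcs_top.
- move=> i; apply/row_subP => j; rewrite row_mul; apply/HV.
  apply: lcs_aut => //; apply/HV; exact: row_sub.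
- move=> i; apply/row_subP => j; apply/HV; apply: lcs_mono; apply/HV.
  exact: row_sub.
- move=> i ic; have [x [Hx Hnx]] := lcs_strict nc ic.
  have sub : (V i.+1 <= V i)%MS.
    apply/row_subP => j; apply/HV; apply: lcs_mono; apply/HV; exact: row_sub.
  have : (V i.+1 < V i)%MS.
    rewrite ltmxE sub /=; apply/negP => s2; apply: Hnx; apply/HV.
    apply: submx_trans s2; exact/HV.
  by rewrite ltmxErank => /andP [].
Qed.

Lemma prod_ge1_eq1 (I : eqType) (r : seq I) (F : I -> algC) :
  (forall i, i \in r -> 1 <= F i) -> \prod_(i <- r) F i = 1 ->
  forall i, i \in r -> F i = 1.
Proof.
elim: r => [|a r IH] // H; rewrite big_cons => e i.
have ge1 : 1 <= \prod_(j <- r) F j.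
  rewrite big_seq; apply: (big_ind (fun x => 1 <= x)) => //; first exact: mulr_ege1.
  by move=> j jr; apply: H; rewrite inE jr orbT.
have Fa : 1 <= F a by apply: H; rewrite inE eqxx.
have Fa1 : F a = 1.
  apply/le_anti; rewrite Fa andbT -e; apply: ler_peMr => //.
  exact: le_trans ler01 Fa.
rewrite Fa1 mul1r in e; rewrite inE => /orP [/eqP -> //|ir].
by apply: IH => // j jr; apply: H; rewrite inE jr orbT.
Qed.

Lemma has_lt_gt (l : seq algC) : l != [::] ->
  (forall z, z \in l -> `|z| != 1) -> \prod_(z <- l) `|z| = 1 ->
  has (fun z => `|z| < 1) l && has (fun z => 1 < `|z|) l.
Proof.
move=> ne H e.
have tri z : z \in l -> (`|z| < 1) || (1 < `|z|).
  by move=> zl; rewrite -real_neqr_lt ?H // ?realE ?normr_ge0 ?ler01.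
apply/andP; split; apply: contraT => hn.
- have all1 z : z \in l -> 1 < `|z|.
    move=> zl; have := tri z zl; case/orP => // lt; case/negP: hn.
    by apply/hasP; exists z.
  case: l ne H e all1 {tri hn} => // a l _ _; rewrite big_cons => e all1.
  have ge1 : 1 <= \prod_(j <- l) `|j|.
    rewrite big_seq; apply: (big_ind (fun x => 1 <= x)) => //; first exact: mulr_ege1.
    by move=> j jl; apply: ltW; apply: all1; rewrite inE jl orbT.
  have lt := all1 a (mem_head _ _).
  have : `|a| <= `|a| * \prod_(j <- l) `|j| by apply: ler_peMr.
  by rewrite e => le; have := lt_le_trans lt le; rewrite ltxx.
- have all1 z : z \in l -> `|z| < 1.
    move=> zl; have := tri z zl; case/orP => // lt; case/negP: hn.
    by apply/hasP; exists z.
  case: l ne H e all1 {tri hn} => // a l _ _; rewrite big_cons => e all1.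
  have le1 : \prod_(j <- l) `|j| <= 1.
    rewrite big_seq; apply: (@proj2 (0 <= \prod_(j <- l | j \in l) `|j|)).
    apply/andP; apply: (big_ind (fun x => (0 <= x) && (x <= 1))) => //.
    + by rewrite ler01 lexx.
    + move=> x y /andP [x0 x1] /andP [y0 y1].
      by rewrite mulr_ge0 // mulr_ile1.
    + by move=> j jl; rewrite normr_ge0 ltW // all1 // inE jl orbT.
  have lt := all1 a (mem_head _ _).
  have : `|a| * \prod_(j <- l) `|j| <= `|a| by apply: ler_piMr.
  by rewrite e => le; have := le_lt_trans le lt; rewrite ltxx.
Qed.

Lemma sum_count_ge (T : eqType) (P : pred algC) (rt : T -> seq algC) (ps : seq T) :
  (forall p, p \in ps -> has P (rt p)) ->
  (size ps <= sumn (map (count P) (map rt ps)))%N.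
Proof.
elim: ps => [|p ps IH] //= H.
have := H p (mem_head _ _); rewrite has_count => h.
by rewrite -addn1 addnC leq_add // IH // => q qps; apply: H; rewrite inE qps orbT.
Qed.

Lemma count_roots (chi : {poly rat}) (ps : seq {poly rat}) (rs : seq algC) :
  chi \is monic -> (forall i, chi`_i \is a Num.int) -> `|chi`_0| = 1 ->
  all (fun q => q \is monic) ps -> all (fun q : {poly rat} => 1 < size q)%N ps ->
  \prod_(q <- ps) q %| chi ->
  (forall z : algC, root (map_poly ratr chi) z -> `|z| != 1) ->
  map_poly ratr chi = \prod_(z <- rs) ('X - z%:P) ->
  (size ps <= count (fun z : algC => (`|z| < 1)%R) rs)%N /\
  (size ps <= count (fun z : algC => (1 < `|z|)%R) rs)%N.
Proof.
move=> mchi ichi c0 mps sps dps hyp hrs.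
pose phi := map_poly (ratr : rat -> algC).
have mprod : \prod_(q <- ps) q \is monic.
  by rewrite big_seq; apply: monic_prod => q qps; apply: (allP mps).
pose q0 := chi %/ \prod_(q <- ps) q.
have echi : chi = q0 * \prod_(q <- ps) q by rewrite divpK.
have mq0 : q0 \is monic by move: mchi; rewrite echi monicMr.
pose L := q0 :: ps.
have mL p : p \in L -> p \is monic.
  by rewrite inE => /orP [/eqP -> //|pps]; apply: (allP mps).
have dL p : p \in L -> p %| chi.
  rewrite inE => /orP [/eqP ->|pps]; first by rewrite echi dvdp_mulr.
  apply: dvdp_trans dps; rewrite (big_rem p) //=; exact: dvdp_mulr.
pose rt p := sval (closed_field_poly_normal (phi p)).
have ert p : p \is monic -> phi p = \prod_(z <- rt p) ('X - z%:P).
  move=> mp; rewrite {1}(svalP (closed_field_poly_normal (phi p))) -/(rt p).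
  by rewrite (monicP (_ : phi p \is monic)) ?scale1r // map_monic.
have rootsL p z : p \in L -> z \in rt p -> root (phi chi) z.
  move=> pL zr; apply: (@root_dvdp _ (phi p)); first by rewrite dvdp_map; exact: dL.
  by rewrite ert ?mL // root_prod_XsubC.
have Achi z : root (phi chi) z -> z \in Aint.
  move=> rz; apply: root_monic_Aint rz _ _; first by rewrite map_monic.
  apply/polyOverP => i; rewrite coef_map /=.
  by have /intrP [m ->] := ichi i; rewrite rmorph_int intr_int.
have a_def p : p \is monic -> (phi p).[0] = \prod_(z <- rt p) (- z).
  move=> mp; rewrite ert // horner_prod; apply: eq_bigr => z _.
  by rewrite hornerXsubC sub0r.
have aint p : p \in L -> (phi p).[0] \in Num.int.
  move=> pL; apply: Cint_rat_Aint.
    have -> : (phi p).[0] = ratr (p.[0]) by rewrite -horner_map rmorph0.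
    exact: Crat_rat.
  rewrite a_def ?mL // big_seq; apply: rpred_prod => z zr; rewrite rpredN; apply: Achi.
  exact: (rootsL _ _ pL zr).
have e0 : \prod_(p <- L) `|(phi p).[0]| = 1.
  rewrite -normr_prod -horner_prod -rmorph_prod big_cons -echi horner_coef0.
  by rewrite coef_map /= -ratr_norm c0 rmorph1.
have ge1 p : p \in L -> 1 <= `|(phi p).[0]|.
  move=> pL; apply: norm_intr_ge1; first exact: aint.
  apply/eqP => z0; move: e0; rewrite (big_rem p) //= z0 normr0 mul0r => /eqP.
  by rewrite eq_sym oner_eq0.
have eq1 := prod_ge1_eq1 ge1 e0.
have hasb p : p \in ps -> has (fun z => `|z| < 1) (rt p) && has (fun z => 1 < `|z|) (rt p).
  move=> pps; have pL : p \in L by rewrite inE pps orbT.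
  apply: has_lt_gt.
  - apply/eqP => e; have := (allP sps) p pps.
    by rewrite -(size_map_poly (ratr : {rmorphism rat -> algC})) -/(phi p) ert ?mL // e big_nil size_poly1.
  - by move=> z zr; apply: hyp; exact: (rootsL _ _ pL zr).
  - have := eq1 p pL; rewrite a_def ?mL // normr_prod => e1.
    by rewrite -[X in _ = X]e1; apply: eq_bigr => z _; rewrite normrN.
have perm : perm_eq rs (flatten (map rt L)).
  apply: prod_XsubC_eq; rewrite -hrs big_flatten big_map.
  have -> : \prod_(p <- L) \prod_(z <- rt p) ('X - z%:P) = \prod_(p <- L) phi p.
    by apply: eq_big_seq => p pL; rewrite ert ?mL.
  by rewrite -rmorph_prod big_cons -echi.
have cnt P : count P rs = (count P (rt q0) + sumn (map (count P) (map rt ps)))%N.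
  by rewrite (permP perm) count_flatten.
split; rewrite cnt; apply: leq_trans (leq_addl _ _); apply: sum_count_ge.
- by move=> p pps; case/andP: (hasb p pps).
- by move=> p pps; case/andP: (hasb p pps).
Qed.

Unset Implicit Arguments. Set Strict Implicit.
Theorem mainTheorem10 (n : nat) (br : 'rV[rat]_n -> 'rV[rat]_n -> 'rV[rat]_n)
  (c : nat) (f : 'M[rat]_n) :
  is_lie_bracket br -> nilpotency_class br c ->
  is_lie_automorphism br f -> anosov f ->
  forall rs : seq algC, char_polyC f = \prod_(z <- rs) ('X - z%:P) ->
  (c <= count (fun z : algC => (`|z| < 1)%R) rs)%N /\
  (c <= count (fun z : algC => (1 < `|z|)%R) rs)%N.
Proof.
move=> _ nc aut [hyp [ichi hdet]] rs hrs.
have [ps [s1 s2 s3 s4]] := lie_flag nc aut.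
have e : char_polyC f = map_poly ratr (char_poly f) by rewrite /char_polyC map_char_poly.
rewrite -s1; apply: (count_roots (char_poly_monic f) ichi) => //.
- rewrite char_poly_det normrM normrX normrN1 expr1n mul1r.
  by case: hdet => ->; rewrite ?normrN normr1.
- by move=> z; rewrite -e; apply: hyp.
- by rewrite -e.
Qed.
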